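(* Let $A$ be a domain equipped with an ultrametric absolute value $|\cdot|$ and let $A_0$ be a dense subring of $A$ such that $A=A_0+gA$ for every nonzero $g\in A_0$. Put $E=\operatorname{Quot}(A)$, $E_0=\operatorname{Quot}(A_0)$, and let $E_1,E_2$ be subfields of $E$ with $E_0\subseteq E_2$. Let $n\in\mathbb{N}$ and suppose: (i) the localization $(A_0\setminus\{0\})^{-1}A$ equals $E$; (ii) for every $b\in\operatorname{Mat}_n(A)$ with $|b-\mathbb{1}|<1$ there exist $b_1\in\operatorname{GL}_n(E_1)$ and $b_2\in\operatorname{GL}_n(E_2)$ with $b=b_1b_2$. Then $\operatorname{GL}_n(E)=\operatorname{GL}_n(E_1)\cdot\operatorname{GL}_n(E_2)$.
   Context: For a matrix $(a_{ij})$ over $A$, $|(a_{ij})|=\max_{i,j}|a_{ij}|$; $\mathbb{1}$ denotes the $n\times n$ identity matrix. ''Dense'' refers to the topology induced by $|\cdot|$. *)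

(* Defs.v *)
From HB Require Import structures.
From mathcomp Require Import all_boot all_order all_algebra.
Set Implicit Arguments. Unset Strict Implicit. Unset Printing Implicit Defensive.
Import Order.TTheory GRing.Theory Num.Theory.
Local Open Scope ring_scope.

Definition ultrametric_absval (A : nzRingType) (R : realFieldType) (v : A -> R) : Prop :=
  [/\ forall x, 0 <= v x,
      forall x, v x = 0 <-> x = 0,
      forall x y, v (x * y) = v x * v y
    & forall x y, v (x + y) <= Num.max (v x) (v y)].

Definition mxabs (A : nzRingType) (R : realFieldType) (v : A -> R) (m n : nat)
  (M : 'M[A]_(m, n)) : R :=
  \big[Num.max/0]_(i < m) \big[Num.max/0]_(j < n) v (M i j).

Definition dense_in (A : nzRingType) (R : realFieldType) (v : A -> R) (S : {pred A}) : Prop :=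
  forall a : A, forall eps : R, 0 < eps -> exists2 a0, a0 \in S & v (a - a0) < eps.

Definition GLover (E : fieldType) (n : nat) (F : {pred E}) (M : 'M[E]_n) : Prop :=
  M \is a mxOver F /\ M \in unitmx.

(* Main.v *)
Require Import Defs.
From HB Require Import structures.
From mathcomp Require Import all_boot all_order all_algebra.
From mathcomp Require Import ring lra.
Import Order.TTheory GRing.Theory Num.Theory.
Local Open Scope ring_scope.

Lemma det_over (R : comNzRingType) (S : subringClosed R) n (M : 'M[R]_n) :
  M \is a mxOver S -> \det M \in S.
Proof.
move=> /mxOverP MS; rewrite /determinant; apply: rpred_sum => s _.
apply: rpredM; first exact: rpredX (rpredN1 _).
by apply: rpred_prod => i _; exact: MS.
Qed.

Lemma invmx_over (F : fieldType) (S : divringClosed F) n (M : 'M[F]_n) :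
  M \is a mxOver S -> invmx M \is a mxOver S.
Proof.
move=> MS; rewrite /invmx; case: ifP => // _.
apply/mxOverP => i j; rewrite !mxE.
apply: rpredM; first by rewrite rpredV; exact: det_over.
rewrite /cofactor; apply: rpredM; first exact: rpredX (rpredN1 _).
apply: det_over; apply/mxOverP => a b; rewrite !mxE; exact: (mxOverP MS).
Qed.

Lemma aux_field (F : fieldType) (c g q a b : F) :
  q != 0 -> (c + g * q * a) / q - (c + g * q * b) / q = g * (a + - b).
Proof. by move=> qnz; field. Qed.

Section V.
Variables (A : idomainType) (R : realFieldType) (v : A -> R).
Hypothesis hv : ultrametric_absval v.

Lemma v0 : v 0 = 0. Proof. by case: hv => _ h _ _; apply/h. Qed.
Lemma v1 : v 1 = 1.
Proof.
case: hv => _ h hM _.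
have h1 : v 1 != 0 by apply/eqP => /h /eqP; rewrite oner_eq0.
have e : v 1 * v 1 = v 1 * 1 by rewrite -hM mulr1 mulr1.
by apply: (mulfI h1).
Qed.
Lemma vN z : v (- z) = v z.
Proof.
case: hv => hge _ hM _.
have e : v (-1) * v (-1) = 1 by rewrite -hM mulrNN mulr1 v1.
have p := hge (-1).
have e1 : v (-1) = 1 by nra.
by rewrite -mulN1r hM e1 mul1r.
Qed.
Lemma vsum_lt1 (I : Type) (r : seq I) (P : pred I) (F : I -> A) :
  (forall i, P i -> v (F i) < 1) -> v (\sum_(i <- r | P i) F i) < 1.
Proof.
move=> hF; apply: (big_ind (fun z => v z < 1)) => //.
- by rewrite v0 ltr01.
- move=> x y hx hy; case: hv => _ _ _ hD.
  by apply: le_lt_trans (hD x y) _; rewrite gt_max hx hy.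
Qed.
End V.

Lemma mxabs_lt1 (A : nzRingType) (R : realFieldType) (v : A -> R) n (M : 'M[A]_n) :
  (forall i j, v (M i j) < 1) -> mxabs v M < 1.
Proof.
move=> h; rewrite /mxabs; apply: (big_ind (fun z => z < 1)) => //.
- by move=> x y hx hy; rewrite gt_max hx hy.
- move=> i _; apply: (big_ind (fun z => z < 1)) => //.
  by move=> x y hx hy; rewrite gt_max hx hy.
Qed.

Theorem proposition3p2
  (A : idomainType) (R : realFieldType) (v : A -> R)
  (A0 : {pred A}) (E1 E2 : {pred {fraction A}}) (n : nat) :
  ultrametric_absval v ->
  subring_closed A0 ->
  dense_in v A0 ->
  (forall g, g \in A0 -> g != 0 ->
     forall a : A, exists2 a0, a0 \in A0 & exists c : A, a = a0 + g * c) ->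
  divring_closed E1 ->
  divring_closed E2 ->
  (* E_0 = Quot(A_0) is contained in E_2 *)
  (forall a b, a \in A0 -> b \in A0 -> b != 0 -> tofrac a / tofrac b \in E2) ->
  (* (i) (A_0 \ {0})^{-1} A = E *)
  (forall x : {fraction A},
     exists a : A, exists2 g : A, (g \in A0) && (g != 0) & x = tofrac a / tofrac g) ->
  (* (ii) *)
  (forall b : 'M[A]_n, mxabs v (b - 1%:M) < 1 ->
     exists (b1 : 'M[{fraction A}]_n) (b2 : 'M[{fraction A}]_n), [/\ GLover E1 b1, GLover E2 b2 & map_mx (@tofrac A) b = b1 *m b2]) ->
  (* GL_n(E) = GL_n(E_1) GL_n(E_2) *)
  forall x : 'M[{fraction A}]_n,
    x \in unitmx <-> exists (b1 : 'M[{fraction A}]_n) (b2 : 'M[{fraction A}]_n), [/\ GLover E1 b1, GLover E2 b2 & x = b1 *m b2].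
Proof.
move=> hv hA0 hdense hdiv hE1 hE2 hE0 hloc hii x; split; last first.
  by move=> [b1 [b2 [[_ u1] [_ u2] ->]]]; rewrite unitmx_mul u1 u2.
move=> ux.
pose S0 : subringClosed A := HB.pack A0 (GRing.isSubringClosed.Build A A0 hA0).
pose S2 : divringClosed {fraction A} := HB.pack E2 (GRing.isDivringClosed.Build _ E2 hE2).
have H1 : forall p : 'I_n * 'I_n, exists ag : A * A,
    ((ag.2 \in A0) && (ag.2 != 0)) /\ x p.1 p.2 = tofrac ag.1 / tofrac ag.2.
  move=> p; have [a [g hg e]] := hloc (x p.1 p.2); by exists (a, g).
have [f hf] := fin_all_exists H1.
pose G := \prod_(p : 'I_n * 'I_n) (f p).2.
have GA0 : G \in A0.
  by change (G \in S0); apply: rpred_prod => p _; case: (hf p) => /andP[].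
have Gnz : G != 0.
  by apply/prodf_neq0 => p _; case: (hf p) => /andP[].
have H2 : forall p : 'I_n * 'I_n, exists z : A, x p.1 p.2 * tofrac G = tofrac z.
  move=> p; exists ((f p).1 * \prod_(q | q != p) (f q).2).
  rewrite /G (bigD1 p) //= !rmorphM; case: (hf p) => /andP[_ gnz] ->.
  by rewrite mulrA divfK // tofrac_eq0.
have [af haf] := fin_all_exists H2.
pose K := 1 + \sum_(p : 'I_n * 'I_n) v (af p).
have vge : forall z, 0 <= v z by case: hv.
have Kpos : 0 < K by rewrite /K ltr_pwDl // sumr_ge0.
have afK : forall p, v (af p) < K.
  move=> p; rewrite /K (bigD1 p) //=; have : 0 <= \sum_(q | q != p) v (af q) by apply: sumr_ge0. lra.

pose xi := invmx x.
have H3 : forall p : 'I_n * 'I_n, exists h : (A * A) * A,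
   [/\ h.1.1 \in A0, h.1.2 \in A0, h.1.2 != 0, v h.2 * K < 1 &
       xi p.1 p.2 - tofrac h.1.1 / tofrac h.1.2 = tofrac G * tofrac h.2].
  move=> p; have [a [q /andP[qA0 qnz] e]] := hloc (xi p.1 p.2).
  have ggA0 : G * q \in A0 by change (G * q \in S0); rewrite rpredM.
  have ggnz : G * q != 0 by rewrite mulf_neq0.
  have [c1 c1A0 [s1 es1]] := hdiv _ ggA0 ggnz a.
  have [s sA0 vs] := hdense s1 K^-1 ltac:(by rewrite invr_gt0).
  exists ((c1 + G * q * s, q), s1 - s); split => //=.
  - by change (c1 + G * q * s \in S0); rewrite rpredD // rpredM.
  - by rewrite -ltr_pdivlMr // mul1r.
  - rewrite e es1.
    have qnz' : tofrac q != 0 by rewrite tofrac_eq0.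
    rewrite !rmorphD !rmorphM /=.
    by rewrite rmorphN; apply: aux_field.
have := H3. move=> /fin_all_exists [h hh].
pose alpha : 'M[A]_n := \matrix_(i, k) af (i, k).
pose T : 'M[A]_n := \matrix_(k, j) (h (k, j)).2.
pose c : 'M[{fraction A}]_n :=
  \matrix_(k, j) (tofrac (h (k, j)).1.1 / tofrac (h (k, j)).1.2).
pose y : 'M[A]_n := 1%:M - alpha *m T.
have Hy : mxabs v (y - 1%:M) < 1.
  have -> : y - 1%:M = - (alpha *m T) by rewrite /y addrAC subrr add0r.
  apply: mxabs_lt1 => i j; rewrite !mxE (vN _ _ _ hv); apply: (vsum_lt1 _ _ _ hv) => k _.
  rewrite !mxE; case: hv => _ _ hM _; rewrite hM.
  have := afK (i, k); case: (hh (k, j)) => _ _ _ ht _.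
  have := vge (af (i, k)); have := vge (h (k, j)).2.
  move=> a1 a2 a3; nra.
have Hc : map_mx (@tofrac A) y = x *m c.
  have eD : xi - c = tofrac G *: map_mx (@tofrac A) T.
    apply/matrixP => k j; rewrite !mxE; by case: (hh (k, j)).
  have -> : c = xi - (xi - c) by rewrite opprB addrC subrK.
  rewrite mulmxBr mulmxV // eD /y map_mxB map_mx1 map_mxM; congr (_ - _).
  apply/matrixP => i j; rewrite !mxE; apply: eq_bigr => k _.
  rewrite !mxE mulrA; congr (_ * _); exact: (esym (haf (i, k))).

have [b1 [b2 [g1 [o2 u2] eb]]] := hii y Hy.
have uc : c \in unitmx.
  have : x *m c \in unitmx by rewrite -Hc eb unitmx_mul; case: g1 => _ ->; rewrite u2.
  by rewrite unitmx_mul => /andP[].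
have cO : c \is a mxOver S2.
  apply/mxOverP => k j; rewrite mxE; case: (hh (k, j)) => a1 a2 a3 _ _.
  exact: hE0.
exists b1, (b2 *m invmx c); split; first exact: g1.
  split; last by rewrite unitmx_mul u2 unitmx_inv uc.
  change (b2 *m invmx c \is a mxOver S2).
  by apply: mxOverM => //; apply: invmx_over.
by rewrite mulmxA -eb Hc mulmxK.
Qed.
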